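(* Let $U\subseteq V$, let $H=(U,E(U))$ be the induced subgraph with inherited weights, let $(L,R)$ be a partition of $V\setminus U$ into two (possibly empty) sets, and let $f\in\ell^2(V,w)$ satisfy $f(v)=0$ for $v\notin U$ and $\sum_{v\in U}w_H(v)f(v)^2>0$. Suppose that for every $t$ with $0<t\le\max_v|f(v)|$, $$\min\big(\gamma(L\cup L_f(t),R\cup R_f(t)),\ \gamma(L\cup R_f(t),R\cup L_f(t))\big)>\gamma(L,R).$$ Then $\sqrt{72\,\mathcal R^+_H(f)}\ge\mathcal R^+_G(f)$.
   Context: $G=(V,E,w)$ finite undirected, positive edge weights, $w(v)=\sum_{u\sim v}w(u,v)\ge1$. $E(U)$ is the set of edges with both endpoints in $U$; $w_H(v)=\sum_{u\in U,\{u,v\}\in E}w(u,v)$. $w(E(S))$ is the weight of edges inside $S$; $w(E(S,T))$ the weight of edges between disjoint $S,T$. For disjoint $L,R\subseteq V$, the uncutness is $\gamma(L,R)=w(E(L))+w(E(R))+w(E(L\cup R,V\setminus(L\cup R)))$. For $t>0$, $L_f(t)=\{v:f(v)\le-t\}$, $R_f(t)=\{v:f(v)\ge t\}$. $\mathcal R^+_G(f)=\sum_{\{u,v\}\in E}w(u,v)(f(u)+f(v))^2/\sum_{v\in V}w(v)f(v)^2$ and $\mathcal R^+_H(f)=\sum_{\{u,v\}\in E(U)}w(u,v)(f(u)+f(v))^2/\sum_{v\in U}w_H(v)f(v)^2$. *)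

(* Defs.v *)
From HB Require Import structures.
From mathcomp Require Import all_boot all_order all_algebra.
Set Implicit Arguments. Unset Strict Implicit. Unset Printing Implicit Defensive.
Import Order.TTheory GRing.Theory Num.Theory.
Local Open Scope ring_scope.

Section Graph.
Variables (R : rcfType) (T : finType) (w : T -> T -> R).
(* A weighted graph on vertex set T: w u v > 0 iff {u,v} is an edge,
   w u v = 0 otherwise; w symmetric, no self-loops (hypotheses of theorem). *)

Definition wdeg (v : T) : R := \sum_(u : T) w u v.

Definition wdegH (U : {set T}) (v : T) : R := \sum_(u in U) w u v.

(* w(E(S)) : total weight of (unordered) edges with both endpoints in S *)
Definition wE (S : {set T}) : R := 2^-1 * \sum_(u in S) \sum_(v in S) w u v.

Definition wcut (S S' : {set T}) : R := \sum_(u in S) \sum_(v in S') w u v.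

Definition uncut (A B : {set T}) : R :=
  wE A + wE B + wcut (A :|: B) (~: (A :|: B)).

Definition Lset (f : T -> R) (t : R) : {set T} := [set v | f v <= - t].
Definition Rset (f : T -> R) (t : R) : {set T} := [set v | t <= f v].

(* R^+_G(f) ; the sum over unordered edges is half the sum over ordered pairs *)
Definition RayG (f : T -> R) : R :=
  (2^-1 * \sum_(u : T) \sum_(v : T) w u v * (f u + f v) ^+ 2)
  / (\sum_(v : T) wdeg v * f v ^+ 2).

Definition RayH (U : {set T}) (f : T -> R) : R :=
  (2^-1 * \sum_(u in U) \sum_(v in U) w u v * (f u + f v) ^+ 2)
  / (\sum_(v in U) wdegH U v * f v ^+ 2).

Definition maxabs (f : T -> R) : R := \big[Num.max/0]_(v : T) `|f v|.
End Graph.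

(* Main.v *)
Require Import Defs.
From HB Require Import structures.
From mathcomp Require Import all_boot all_order all_algebra.
From mathcomp Require Import ring lra.
Import Order.TTheory GRing.Theory Num.Theory.
Local Open Scope ring_scope.

Fixpoint integ {R : rcfType} (p : R) (s : seq R) (h : R -> R) : R :=
  if s is a :: s' then (a ^+ 2 - p ^+ 2) * h a + integ a s' h else 0.

Lemma integ_sum2 (R : rcfType) (T : finType) (p : R) (s : seq R)
  (F : T -> T -> R -> R) :
  integ p s (fun t => \sum_u \sum_v F u v t) =
  \sum_u \sum_v integ p s (F u v).
Proof.
elim: s p => [|a s IH] p /=.
  by rewrite big1 // => u _; rewrite big1.
rewrite IH mulr_sumr -big_split; apply: eq_bigr => u _.
by rewrite mulr_sumr -big_split.
Qed.

Lemma integ_ext (R : rcfType) (p : R) (s : seq R) (h1 h2 : R -> R) :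
  0 <= p -> path <=%R p s ->
  (forall t, t \in s -> 0 < t -> h1 t = h2 t) ->
  integ p s h1 = integ p s h2.
Proof.
elim: s p => [|a s IH] p //= p0 /andP[pa ps] H.
rewrite (IH a); last 3 first.
- exact: le_trans p0 pa.
- exact: ps.
- by move=> t ts; apply: H; rewrite inE ts orbT.
congr (_ + _); have [a0|] := ltP 0 a.
  by rewrite H // inE eqxx.
move=> a0; have -> : a = 0 by apply/eqP; rewrite eq_le a0 (le_trans p0 pa).
have -> : p = 0 by apply/eqP; rewrite eq_le p0 andbT (le_trans pa a0).
by rewrite expr0n subrr !mul0r.
Qed.

Lemma integ_ge0 (R : rcfType) (p : R) (s : seq R) (h : R -> R) :
  0 <= p -> path <=%R p s ->
  (forall t, t \in s -> 0 < t -> 0 <= h t) -> 0 <= integ p s h.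
Proof.
elim: s p => [|a s IH] p //= p0 /andP[pa ps] H.
apply: addr_ge0; last first.
  by apply: IH; [exact: le_trans p0 pa| exact ps| move=> t ts; apply: H; rewrite inE ts orbT].
have [a0|] := ltP 0 a.
  apply: mulr_ge0; last by apply: H; rewrite ?inE ?eqxx.
  by rewrite subr_ge0; have := le_trans p0 pa; nra.
move=> a0; have -> : a = 0 by apply/eqP; rewrite eq_le a0 (le_trans p0 pa).
have -> : p = 0 by apply/eqP; rewrite eq_le p0 andbT (le_trans pa a0).
by rewrite expr0n subrr !mul0r.
Qed.

Lemma integ_zero (R : rcfType) (p c : R) (s : seq R) :
  path <=%R p s -> c <= p -> integ p s (fun t => ((t <= c)%R)%:R) = 0.
Proof.
elim: s p => [|a s IH] p //= /andP[pa ps] cp.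
rewrite IH ?(le_trans cp pa) // addr0.
have [ac|] := leP a c; last by rewrite mulr0.
have -> : a = p by apply/eqP; rewrite eq_le pa (le_trans ac cp).
by rewrite subrr mul0r.
Qed.

Lemma integ_ind (R : rcfType) (p c : R) (s : seq R) :
  path <=%R p s -> c \in s -> integ p s (fun t => ((t <= c)%R)%:R) = c ^+ 2 - p ^+ 2.
Proof.
elim: s p => [|a s IH] p //= /andP[pa ps]; rewrite inE => /orP[/eqP ->|cs].
  by rewrite lexx mulr1 integ_zero // addr0.
have ac : a <= c.
  by move: (order_path_min le_trans ps) => /allP; apply.
by rewrite ac mulr1 IH //; ring.
Qed.

Lemma integ_lin (R : rcfType) (p : R) (s : seq R) (c0 c1 c2 c3 c4 : R) (h1 h2 h3 h4 : R -> R) :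
  integ p s (fun t => c0 * (c1 * (h1 t - c2 * h2 t) - 2^-1 * (c3 * h3 t + c4 * h4 t))) =
  c0 * (c1 * (integ p s h1 - c2 * integ p s h2) - 2^-1 * (c3 * integ p s h3 + c4 * integ p s h4)).
Proof.
elim: s p => [|a s IH] p /=; first by ring.
by rewrite IH; ring.
Qed.


Definition hb {R : rcfType} (xu yu xv yv : bool) : R :=
  2^-1 * (xu && xv)%:R + 2^-1 * (yu && yv)%:R + ((xu || yu) && ~~ (xv || yv))%:R.

Lemma bool_key (R : rcfType) (lu ru au bu lv rv av bv : bool) :
  ~~ (lu && ru) -> (lu || ru) ==> ~~ (au || bu) -> ~~ (au && bu) ->
  ~~ (lv && rv) -> (lv || rv) ==> ~~ (av || bv) -> ~~ (av && bv) ->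
  2^-1 * ((hb (lu || au) (ru || bu) (lv || av) (rv || bv) + hb (lu || bu) (ru || au) (lv || bv) (rv || av)
           - 2 * hb lu ru lv rv) +
          (hb (lv || av) (rv || bv) (lu || au) (ru || bu) + hb (lv || bv) (rv || av) (lu || bu) (ru || au)
           - 2 * hb lv rv lu ru)) =
  (~~ (lu || ru))%:R * (~~ (lv || rv))%:R *
     (((au || bu) || (av || bv))%:R - ((au && bv) || (bu && av))%:R)
  - 2^-1 * ((lu || ru)%:R * (av || bv)%:R + (lv || rv)%:R * (au || bu)%:R) :> R.
Proof.
by case: lu; case: ru; case: au; case: bu; case: lv; case: rv; case: av; case: bv;
  rewrite //= /hb /=; lra.
Qed.


Lemma cneg_lem (R : rcfType) (t x y : R) : 0 < t ->
  (((x <= -t) && (t <= y)) || ((t <= x) && (y <= -t)))%:R =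
  ((x * y < 0)%R)%:R * ((t <= Num.min `|x| `|y|)%R)%:R :> R.
Proof.
move=> t0; rewrite le_min !ler_normr !(lerNr t).
case: (leP x (-t)) => h1; case: (leP t x) => h2; case: (leP y (-t)) => h3;
  case: (leP t y) => h4; rewrite /= ?mulr0 ?mulr1 //;
  case: ltP => h5 //; nra.
Qed.


Lemma double_ind (R : rcfType) (T : finType) (F : T -> T -> R) (S S' : {set T}) :
  \sum_(u in S) \sum_(v in S') F u v = \sum_u \sum_v F u v * ((u \in S) && (v \in S'))%:R.
Proof.
rewrite big_mkcond; apply: eq_bigr => u _; rewrite big_mkcond /=.
case: (u \in S) => /=; last by rewrite big1 // => v _; rewrite mulr0.
by apply: eq_bigr => v _; case: (v \in S'); rewrite ?mulr1 ?mulr0.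
Qed.

Lemma uncut_sum (R : rcfType) (T : finType) (w : T -> T -> R) (X Y : {set T}) :
  uncut w X Y = \sum_u \sum_v w u v * hb (u \in X) (u \in Y) (v \in X) (v \in Y).
Proof.
rewrite /uncut /wE /wcut !double_ind !mulr_sumr -!big_split; apply: eq_bigr => u _.
rewrite !mulr_sumr -!big_split; apply: eq_bigr => v _.
by rewrite /= /hb in_setC !in_setU; ring.
Qed.

Lemma sum_swap (R : rcfType) (T : finType) (w : T -> T -> R) (F : T -> T -> R) :
  (forall u v, w u v = w v u) ->
  \sum_u \sum_v w u v * F u v = \sum_u \sum_v w u v * F v u.
Proof.
move=> ws; rewrite exchange_big; apply: eq_bigr => u _; apply: eq_bigr => v _.
by rewrite ws.
Qed.

Lemma sum_sym (R : rcfType) (T : finType) (w : T -> T -> R) (F : T -> T -> R) :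
  (forall u v, w u v = w v u) ->
  \sum_u \sum_v w u v * F u v = \sum_u \sum_v w u v * (2^-1 * (F u v + F v u)).
Proof.
move=> ws.
have -> : \sum_u \sum_v w u v * (2^-1 * (F u v + F v u)) =
   2^-1 * (\sum_u \sum_v w u v * F u v + \sum_u \sum_v w u v * F v u).
  rewrite -big_split mulr_sumr; apply: eq_bigr => u _.
  rewrite -big_split mulr_sumr; apply: eq_bigr => v _ /=; ring.
rewrite -sum_swap //; lra.
Qed.

Lemma step1 (R : rcfType) (T : finType) (w : T -> T -> R)
  (w_sym : forall u v, w u v = w v u)
  (U L Rs : {set T})
  (hLR : [disjoint L & Rs])
  (hcover : L :|: Rs = ~: U)
  (f : T -> R)
  (f_supp : forall v, v \notin U -> f v = 0) (t : R) (t0 : 0 < t) :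
  Num.min (uncut w (L :|: Lset f t) (Rs :|: Rset f t))
             (uncut w (L :|: Rset f t) (Rs :|: Lset f t)) > uncut w L Rs ->
  0 < \sum_u \sum_v w u v *
    (((u \in U) && (v \in U))%:R *
      (((t <= Num.max `|f u| `|f v|)%R)%:R - ((f u * f v < 0)%R)%:R * ((t <= Num.min `|f u| `|f v|)%R)%:R)
     - 2^-1 * ((u \notin U)%:R * ((t <= `|f v|)%R)%:R + (v \notin U)%:R * ((t <= `|f u|)%R)%:R)).
Proof.
rewrite lt_min => /andP[h1 h2].
have hU : forall u, (u \notin U) = (u \in L) || (u \in Rs).
  by move=> u; rewrite -in_setC -hcover in_setU.
have hd : forall u, ~~ ((u \in L) && (u \in Rs)).
  by move=> u; apply/negP => /andP[a b]; move/disjointFr: hLR => /(_ u a); rewrite b.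
have ho : forall u, ((u \in L) || (u \in Rs)) ==> ~~ ((f u <= - t) || (t <= f u)).
  move=> u; apply/implyP; rewrite -hU => /f_supp ->.
  by rewrite oppr_ge0 !leNgt t0 /=.
have hab : forall u, ~~ ((f u <= - t) && (t <= f u)).
  by move=> u; apply/negP => /andP[a b]; clear -t0 a b; lra.
have : 0 < uncut w (L :|: Lset f t) (Rs :|: Rset f t) + uncut w (L :|: Rset f t) (Rs :|: Lset f t)
          - 2 * uncut w L Rs by lra.
have -> : uncut w (L :|: Lset f t) (Rs :|: Rset f t) + uncut w (L :|: Rset f t) (Rs :|: Lset f t)
          - 2 * uncut w L Rs = \sum_u \sum_v w u v * (hb (u \in L :|: Lset f t) (u \in Rs :|: Rset f t)
            (v \in L :|: Lset f t) (v \in Rs :|: Rset f t) +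
          hb (u \in L :|: Rset f t) (u \in Rs :|: Lset f t)
            (v \in L :|: Rset f t) (v \in Rs :|: Lset f t) - 2 * hb (u \in L) (u \in Rs) (v \in L) (v \in Rs)).
  rewrite !uncut_sum mulr_sumr -sumrN -!big_split; apply: eq_bigr => u _ /=.
  rewrite mulr_sumr -sumrN -!big_split; apply: eq_bigr => v _ /=; ring.
rewrite sum_sym //.
congr (0 < _); apply: eq_bigr => u _; apply: eq_bigr => v _; congr (_ * _).
rewrite !in_setU !inE bool_key //.
rewrite -!hU !negbK -natrM mulnb.
rewrite le_max !ler_normr !(lerNr t) cneg_lem //.
by case: (f u <= -t); case: (t <= f u); case: (f v <= -t); case: (t <= f v).
Qed.


Lemma key_ineq (R : rcfType) (x y : R) :
  Num.max `|x| `|y| ^+ 2 - ((x * y < 0)%R)%:R * Num.min `|x| `|y| ^+ 2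
  <= `|x + y| * (`|x| + `|y|).
Proof.
have [hxy|hxy] := leP `|x| `|y|.
    have [hx|hx] := leP 0 x; have [hy|hy] := leP 0 y; have [hs|hs] := leP 0 (x + y);
  move: hxy; rewrite ?(ger0_norm hx) ?(ltr0_norm hx) ?(ger0_norm hy) ?(ltr0_norm hy)
     ?(ger0_norm hs) ?(ltr0_norm hs) => hxy;
  case: ltP => h /=; nra.
have hxy' : `|y| <= `|x| by apply: ltW.
have [hx|hx] := leP 0 x; have [hy|hy] := leP 0 y; have [hs|hs] := leP 0 (x + y);
move: hxy'; rewrite ?(ger0_norm hx) ?(ltr0_norm hx) ?(ger0_norm hy) ?(ltr0_norm hy)
   ?(ger0_norm hs) ?(ltr0_norm hs) => hxy';
case: ltP => h /=; nra.
Qed.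

Lemma final_alg (R : rcfType) (NU D B K : R) :
  0 < D -> 0 <= NU -> 0 <= B -> B <= K -> NU <= 4 * D ->
  (forall e, 0 < e -> 2 * e * K <= NU + 4 * e ^+ 2 * D) ->
  (2^-1 * (NU + 2 * B)) / (D + B) <= Num.sqrt (72%:R * ((2^-1 * NU) / D)).
Proof.
move=> D0 N0 B0 BK ND H.
have q0 : 0 <= NU / D by apply: divr_ge0 => //; exact: ltW.
set s := Num.sqrt (NU / D).
have s0 : 0 <= s by apply: sqrtr_ge0.
have ss : s ^+ 2 = NU / D by apply: sqr_sqrtr.
have NUe : NU = s ^+ 2 * D by rewrite ss; field; rewrite gt_eqF.
have -> : 72%:R * ((2^-1 * NU) / D) = (6 * s) ^+ 2.
  by rewrite exprMn ss; field; rewrite gt_eqF.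
rewrite sqrtr_sqr ger0_norm; last by apply: mulr_ge0.
have s2 : s <= 2.
  have : s ^+ 2 * D <= 4 * D by rewrite -NUe.
  rewrite ler_pM2r // => h; nra.
have Kb : K <= 5 / 2 * s * D.
  have [sp|] := ltP 0 s.
    have := H s sp; rewrite NUe => h.
    have : 2 * s * K <= s * (5 * s * D) by nra.
    nra.
  move=> sle; have se : s = 0 by apply/eqP; rewrite eq_le sle s0.
  rewrite se mulr0 mul0r; apply/negPn/negP; rewrite -ltNge => Kp.
  pose e := K / (4 * D).
  have e0 : 0 < e by apply: divr_gt0 => //; nra.
  have he : 4 * e * D = K by rewrite /e; field; rewrite gt_eqF //; nra.
  have := H e e0; rewrite NUe se expr0n /= mul0r add0r => h.
  nra.
rewrite ler_pdivrMr; last by nra.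
rewrite NUe.
have h1 : 0 <= s * (2 - s) * D by apply: mulr_ge0; [apply: mulr_ge0; lra | exact: ltW].
have h2 : 0 <= s * B by apply: mulr_ge0.
nra.
Qed.


Definition ss {R : rcfType} {T : finType} (w : T -> T -> R) (F : T -> T -> R) : R :=
  \sum_u \sum_v w u v * F u v.

Lemma ss_ext (R : rcfType) (T : finType) (w F G : T -> T -> R) :
  (forall u v, w u v * F u v = w u v * G u v) -> ss w F = ss w G.
Proof. by move=> H; apply: eq_bigr => u _; apply: eq_bigr => v _. Qed.

Lemma ss_lin (R : rcfType) (T : finType) (w F G : T -> T -> R) (a b : R) :
  ss w (fun u v => a * F u v + b * G u v) = a * ss w F + b * ss w G.
Proof.
rewrite /ss !mulr_sumr -big_split; apply: eq_bigr => u _.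
rewrite !mulr_sumr -big_split; apply: eq_bigr => v _ /=; ring.
Qed.

Lemma ss_le (R : rcfType) (T : finType) (w F G : T -> T -> R) :
  (forall u v, 0 <= w u v) -> (forall u v, F u v <= G u v) -> ss w F <= ss w G.
Proof.
move=> w0 H; apply: ler_sum => u _; apply: ler_sum => v _.
by apply: ler_wpM2l.
Qed.

Lemma ss_swap (R : rcfType) (T : finType) (w F : T -> T -> R) :
  (forall u v, w u v = w v u) -> ss w F = ss w (fun u v => F v u).
Proof. by move=> ws; rewrite /ss sum_swap. Qed.

Lemma ss_ge0 (R : rcfType) (T : finType) (w F : T -> T -> R) :
  (forall u v, 0 <= w u v) -> (forall u v, 0 <= F u v) -> 0 <= ss w F.
Proof.
move=> w0 H; apply: sumr_ge0 => u _; apply: sumr_ge0 => v _.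
by apply: mulr_ge0.
Qed.

Lemma ss_scale (R : rcfType) (T : finType) (w F : T -> T -> R) (a : R) :
  ss w (fun u v => a * F u v) = a * ss w F.
Proof.
rewrite /ss mulr_sumr; apply: eq_bigr => u _.
rewrite mulr_sumr; apply: eq_bigr => v _ /=; ring.
Qed.


Theorem mainTheorem14 (R : rcfType) (T : finType) (w : T -> T -> R)
  (w_sym : forall u v, w u v = w v u)
  (w_ge0 : forall u v, 0 <= w u v)
  (w_noloop : forall v, w v v = 0)
  (deg_ge1 : forall v, 1 <= wdeg w v)
  (U L Rs : {set T})
  (hLR : [disjoint L & Rs])
  (hcover : L :|: Rs = ~: U)
  (f : T -> R)
  (f_supp : forall v, v \notin U -> f v = 0)
  (f_pos : 0 < \sum_(v in U) wdegH w U v * f v ^+ 2)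
  (hthr : forall t, 0 < t -> t <= maxabs f ->
     Num.min (uncut w (L :|: Lset f t) (Rs :|: Rset f t))
             (uncut w (L :|: Rset f t) (Rs :|: Lset f t))
     > uncut w L Rs) :
  Num.sqrt (72%:R * RayH w U f) >= RayG w f.
Proof.
pose jU u v : R := ((u \in U) && (v \in U))%:R.
pose nU u : R := (u \notin U)%:R.
pose NU := ss w (fun u v => jU u v * (f u + f v) ^+ 2).
pose D2 := ss w (fun u v => jU u v * f v ^+ 2).
pose Bx := ss w (fun u v => nU v * f u ^+ 2).
pose K := ss w (fun u v => jU u v * (`|f u + f v| * (`|f u| + `|f v|))).
have jU0 : forall u v, 0 <= jU u v by move=> u v; exact: ler0n.
have nU0 : forall u, 0 <= nU u by move=> u; exact: ler0n.
have jUs : forall u v, jU u v = jU v u by move=> u v; rewrite /jU andbC.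
have E1 : ss w (fun u v => nU u * f v ^+ 2) = Bx := @ss_swap R T w (fun u v => nU u * f v ^+ 2) w_sym.
have eG : \sum_u \sum_v w u v * (f u + f v) ^+ 2 = NU + 2 * Bx.
  have -> : NU + 2 * Bx = ss w (fun u v => 1 * (1 * (jU u v * (f u + f v) ^+ 2) + 1 * (nU v * f u ^+ 2)) + 1 * (nU u * f v ^+ 2)).
    rewrite !ss_lin -/NU -/Bx E1; ring.
  apply: eq_bigr => u _; apply: eq_bigr => v _.
  rewrite /jU /nU; case: (boolP (u \in U)) => hu; case: (boolP (v \in U)) => hv /=;
    try rewrite (f_supp _ hu); try rewrite (f_supp _ hv); ring.
have eGd : \sum_v wdeg w v * f v ^+ 2 = D2 + Bx.
  have -> : \sum_v wdeg w v * f v ^+ 2 = ss w (fun u v => f v ^+ 2).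
    rewrite /ss exchange_big /=; apply: eq_bigr => v _; by rewrite /wdeg mulr_suml.
  have -> : D2 + Bx = ss w (fun u v => 1 * (jU u v * f v ^+ 2) + 1 * (nU u * f v ^+ 2)).
    by rewrite ss_lin -/D2 E1; ring.
  apply: ss_ext => u v.
  rewrite /jU /nU; case: (boolP (u \in U)) => hu; case: (boolP (v \in U)) => hv /=;
    try rewrite (f_supp _ hu); try rewrite (f_supp _ hv); ring.
have eH : \sum_(u in U) \sum_(v in U) w u v * (f u + f v) ^+ 2 = NU.
  rewrite double_ind /NU /ss; apply: eq_bigr => u _; apply: eq_bigr => v _.
  rewrite /jU; ring.
have eHd : \sum_(v in U) wdegH w U v * f v ^+ 2 = D2.
  rewrite /wdegH (eq_bigr (fun v => \sum_(u in U) w u v * f v ^+ 2)); last first.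
    by move=> v _; rewrite mulr_suml.
  rewrite (@double_ind R T (fun v u => w u v * f v ^+ 2)) /D2 /ss [RHS]exchange_big /=.
  apply: eq_bigr => u _; apply: eq_bigr => v _; rewrite /jU andbC; ring.
have N0 : 0 <= NU by apply: ss_ge0 => // u v; apply: mulr_ge0 => //; apply: sqr_ge0.
have B0 : 0 <= Bx by apply: ss_ge0 => // u v; apply: mulr_ge0 => //; apply: sqr_ge0.
have D2' : ss w (fun u v => jU u v * f u ^+ 2) = D2.
  rewrite (@ss_swap R T w _ w_sym); apply: ss_ext => u v; by rewrite jUs.
have ND : NU <= 4 * D2.
  apply: (le_trans (@ss_le R T w _ (fun u v => 2 * (jU u v * f u ^+ 2) + 2 * (jU u v * f v ^+ 2)) w_ge0 _)).
    by move=> u v; have := mulr_ge0 (jU0 u v) (sqr_ge0 (f u - f v)); nra.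
  rewrite ss_lin D2' -/D2; lra.
have He : forall e, 0 < e -> 2 * e * K <= NU + 4 * e ^+ 2 * D2.
  move=> e e0.
  rewrite /K -ss_scale.
  apply: (le_trans (@ss_le R T w _ (fun u v => 1 * (jU u v * (f u + f v) ^+ 2) + (2 * e ^+ 2) * (1 * (jU u v * f u ^+ 2) + 1 * (jU u v * f v ^+ 2))) w_ge0 _)).
    move=> u v.
    have core : 2 * e * (`|f u + f v| * (`|f u| + `|f v|)) <= (f u + f v) ^+ 2 + 2 * e ^+ 2 * (f u ^+ 2 + f v ^+ 2).
      rewrite -(real_normK (num_real (f u + f v))) -(real_normK (num_real (f u))) -(real_normK (num_real (f v))).
      have h1 := sqr_ge0 (`|f u + f v| - e * (`|f u| + `|f v|)).
      have h2 := mulr_ge0 (sqr_ge0 e) (sqr_ge0 (`|f u| - `|f v|)).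
      nra.
    have := jU0 u v; nra.
  rewrite !ss_lin D2' -/NU -/D2; lra.
have BK : Bx <= K.
  pose Gi t u v := jU u v * (((t <= Num.max `|f u| `|f v|)%R)%:R - ((f u * f v < 0)%R)%:R * ((t <= Num.min `|f u| `|f v|)%R)%:R) - 2^-1 * (nU u * ((t <= `|f v|)%R)%:R + nU v * ((t <= `|f u|)%R)%:R).
  pose s := sort <=%R [seq `|f v| | v <- enum T].
  have ps : path <=%R 0 s.
    rewrite path_sortedE; last exact: le_trans.
    rewrite sort_sorted ?andbT; last exact: le_total.
    apply/allP => x; rewrite mem_sort => /mapP[v _ ->]; exact: normr_ge0.
  have ins : forall v, `|f v| \in s.
    by move=> v; rewrite mem_sort; apply: map_f; rewrite mem_enum.
  have sle : forall t, t \in s -> t <= maxabs f.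
    move=> t; rewrite mem_sort => /mapP[v _ ->]; exact: le_bigmax.
  have mx : forall u v, Num.max `|f u| `|f v| \in s by move=> u v; case: leP.
  have mn : forall u v, Num.min `|f u| `|f v| \in s by move=> u v; case: leP.
  have I0 : 0 <= \sum_u \sum_v integ 0 s (fun t => w u v * Gi t u v).
    rewrite -integ_sum2; apply: integ_ge0 => // t ts t0; apply: ltW.
    exact: (@step1 R T w w_sym U L Rs hLR hcover f f_supp t t0 (hthr t t0 (sle t ts))).
  have Iuv : forall u v, integ 0 s (fun t => w u v * Gi t u v) =
     w u v * (jU u v * (Num.max `|f u| `|f v| ^+ 2 - ((f u * f v < 0)%R)%:R * Num.min `|f u| `|f v| ^+ 2)
       - 2^-1 * (nU u * f v ^+ 2 + nU v * f u ^+ 2)).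
    move=> u v.
    rewrite (@integ_lin R 0 s (w u v) (jU u v) ((f u * f v < 0)%R%:R) (nU u) (nU v) (fun t => ((t <= Num.max `|f u| `|f v|)%R)%:R) (fun t => ((t <= Num.min `|f u| `|f v|)%R)%:R) (fun t => ((t <= `|f v|)%R)%:R) (fun t => ((t <= `|f u|)%R)%:R)).
    rewrite !integ_ind // -(real_normK (num_real (f u))) -(real_normK (num_real (f v))).
    ring.
  have : 0 <= ss w (fun u v => 1 * (jU u v * (`|f u + f v| * (`|f u| + `|f v|))) + (- 2^-1) * (1 * (nU u * f v ^+ 2) + 1 * (nU v * f u ^+ 2))).
    apply: (le_trans I0); rewrite /ss; apply: ler_sum => u _; apply: ler_sum => v _.
    rewrite Iuv; apply: ler_wpM2l => //.
    have := @key_ineq R (f u) (f v); have := jU0 u v; nra.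
  rewrite !ss_lin -/K E1 -/Bx; lra.
rewrite /RayG /RayH eG eGd eH eHd.
apply: (@final_alg R NU D2 Bx K) => //.
by rewrite -eHd.
Qed.
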